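(* Let $n\geq 0$ be an integer, $r\in\mathbf{N}$ (so $r\geq 1$) and $k\in\mathbf{Z}$. Then \begin{align*} \tilde{A}_{n}^{(r,k)}(x)=\sum_{j=0}^{n}\Bigg\{\sum_{l=0}^{n-j}\sum_{a=0}^{n-j-l}\sum_{a_{1}+\cdots+a_{r}=a}\binom{n}{l+j}\binom{n-j-l}{a}\binom{a}{a_{1},\ldots,a_{r}} S_{1}(l+j,j)\left(\prod_{i=1}^{r}B_{a_{i}}^{(a_{i})}\right)\tilde{C}_{n-j-l-a}^{(k)}\Bigg\}x^{j}, \end{align*} where the inner sum runs over all $r$-tuples of nonnegative integers $(a_1,\ldots,a_r)$ with sum $a$.
   Context: For $k\in\mathbf{Z}$, $Lif_{k}(x)=\sum_{m=0}^{\infty}\frac{x^{m}}{m!(m+1)^{k}}$. For integers $r\geq 0$, $k\in\mathbf{Z}$, the polynomials $\tilde{A}_{n}^{(r,k)}(x)$ are defined by \[\left(\frac{t}{(1+t)\log(1+t)}\right)^{r}Lif_{k}\left(-\log(1+t)\right)(1+t)^{x}=\sum_{n=0}^{\infty}\tilde{A}_{n}^{(r,k)}(x)\frac{t^{n}}{n!}.\] The poly-Cauchy numbers of the second kind $\tilde{C}_{n}^{(k)}$ are defined by $Lif_{k}\left(-\log(1+t)\right)=\sum_{n=0}^{\infty}\tilde{C}_{n}^{(k)}\frac{t^{n}}{n!}$. For an integer $\alpha\geq 0$, the Bernoulli numbers of order $\alpha$ are defined by $\left(\frac{t}{e^{t}-1}\right)^{\alpha}=\sum_{n=0}^{\infty}B_{n}^{(\alpha)}\frac{t^{n}}{n!}$.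 $S_{1}(n,m)$ denotes the signed Stirling numbers of the first kind, defined by $x(x-1)\cdots(x-n+1)=\sum_{m=0}^{n}S_{1}(n,m)x^{m}$; $\binom{a}{a_1,\ldots,a_r}$ is the multinomial coefficient. *)

(* Defs.v *)
From mathcomp Require Import all_boot all_order all_algebra.
Set Implicit Arguments. Unset Strict Implicit. Unset Printing Implicit Defensive.
Import Order.TTheory GRing.Theory Num.Theory.
Local Open Scope ring_scope.

Section FPS.
Variable R : numFieldType.

Definition fps := nat -> R.

Definition fmul (f g : fps) : fps := fun n => \sum_(i < n.+1) f i * g (n - i)%N.
Definition fone : fps := fun n => (n == 0%N)%:R.
Definition fpow (f : fps) (m : nat) : fps := iter m (fmul f) fone.
(* composition f(g(t)), meaningful when g 0 = 0 *)
Definition fcomp (f g : fps) : fps :=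
  fun n => \sum_(m < n.+1) f m * fpow g m n.

Definition fexp : fps := fun n => (n`!%:R)^-1.
Definition flog1p : fps :=
  fun n => if n is 0 then 0 else (-1) ^+ n.-1 / n%:R.
Definition fgeom : fps := fun _ => 1.
(* multiplicative inverse of g, valid when g 0 = 1: 1/g = 1/(1-(1-g)) *)
Definition finv (g : fps) : fps := fcomp fgeom (fun n => fone n - g n).
Definition fshift (f : fps) : fps := fun n => f n.+1.
Definition fonept : fps := fun n => (n <= 1)%N%:R.
Definition fpow1p (x : R) : fps := fcomp fexp (fun n => x * flog1p n).

Definition fLif (k : int) : fps := fun m => (m`!%:R * (m.+1%:R) ^ k)^-1.
Definition fLifmlog (k : int) : fps := fcomp (fLif k) (fun n => - flog1p n).

Definition tC (k : int) (n : nat) : R := n`!%:R * fLifmlog k n.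

(* Bernoulli numbers of order alpha: (t/(e^t-1))^alpha *)
Definition fexpm1_over_t : fps := fun n => (n.+1`!%:R)^-1.
Definition bern (alpha n : nat) : R :=
  n`!%:R * fpow (finv fexpm1_over_t) alpha n.

Definition fbase : fps := finv (fmul fonept (fshift flog1p)).

Definition tA (n r : nat) (k : int) (x : R) : R :=
  n`!%:R * fmul (fmul (fpow fbase r) (fLifmlog k)) (fpow1p x) n.

Definition multinom (r a : nat) (s : 'I_r -> nat) : R :=
  a`!%:R / \prod_(i < r) (s i)`!%:R.

End FPS.

Definition S1 (n m : nat) : int := (\prod_(i < n) ('X - (i%:R)%:P))`_m.

(* Main.v *)
Require Import Defs.
From HB Require Import structures.
From mathcomp Require Import all_boot all_order all_algebra.
From mathcomp Require Import boolp.
From mathcomp Require Import ring zify.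
Set Implicit Arguments. Unset Strict Implicit. Unset Printing Implicit Defensive.
Import Order.TTheory GRing.Theory Num.Theory.
Local Open Scope ring_scope.
Section PS.
Variable R : numFieldType.
Local Notation ps := (fps R).
HB.instance Definition _ := gen_eqMixin ps.
HB.instance Definition _ := gen_choiceMixin ps.
Definition padd (f g : ps) : ps := fun n => f n + g n.
Definition popp (f : ps) : ps := fun n => - f n.
Definition pzero : ps := fun _ => 0.

Lemma fext (f g : ps) : (forall n, f n = g n) -> f = g.
Proof. by move=> h; apply: funext. Qed.

Lemma paddA : associative padd.
Proof. by move=> f g h; apply: fext => n; rewrite /padd addrA. Qed.
Lemma paddC : commutative padd.
Proof. by move=> f g; apply: fext => n; rewrite /padd addrC. Qed.
Lemma padd0 : left_id pzero padd.
Proof. by move=> f; apply: fext => n; rewrite /padd /pzero add0r. Qed.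
Lemma paddN : left_inverse pzero popp padd.
Proof. by move=> f; apply: fext => n; rewrite /padd /pzero /popp addNr. Qed.
HB.instance Definition _ := GRing.isZmodule.Build ps paddA paddC padd0 paddN.

Definition approx N (f : ps) (p : {poly R}) := forall i, (i <= N)%N -> f i = p`_i.
Definition Tp N (f : ps) : {poly R} := \poly_(i < N.+1) f i.
Lemma approxT N f : approx N f (Tp N f).
Proof. by move=> i hi; rewrite coef_poly ltnS hi. Qed.
Lemma approx_mul N f g p q : approx N f p -> approx N g q ->
  approx N (fmul f g) (p * q).
Proof.
move=> hf hg i hi; rewrite coefM /fmul; apply: eq_bigr => j _.
have hj : (j <= N)%N by apply: leq_trans hi; rewrite -ltnS.
by rewrite hf // hg // (leq_trans (leq_subr _ _) hi).
Qed.
Lemma approx_add N f g p q : approx N f p -> approx N g q ->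
  approx N (f + g) (p + q).
Proof. by move=> hf hg i hi; rewrite coefD -hf // -hg. Qed.
Lemma approx_opp N f p : approx N f p -> approx N (- f) (- p).
Proof. by move=> hf i hi; rewrite coefN -hf. Qed.
Lemma approx_one N : approx N (@fone R) 1.
Proof. by move=> i _; rewrite coef1 /fone. Qed.
Lemma approx_eq N f g p : approx N f p -> approx N g p -> forall i, (i <= N)%N -> f i = g i.
Proof. by move=> hf hg i hi; rewrite hf // hg. Qed.

Lemma pmulA : associative (@fmul R).
Proof.
move=> f g h; apply: fext => n.
apply: (@approx_eq n _ _ ( Tp n f * (Tp n g * Tp n h))) => //.
  by apply: approx_mul; [apply: approxT|apply: approx_mul; apply: approxT].
by rewrite mulrA; apply: approx_mul; [apply: approx_mul; apply: approxT|apply: approxT].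
Qed.
Lemma pmulC : commutative (@fmul R).
Proof.
move=> f g; apply: fext => n.
apply: (@approx_eq n _ _ ( Tp n f * Tp n g)) => //.
  by apply: approx_mul => //; apply: approxT.
by rewrite mulrC; apply: approx_mul => //; apply: approxT.
Qed.
Lemma pmul1 : left_id (@fone R) (@fmul R).
Proof.
move=> f; apply: fext => n.
apply: (@approx_eq n _ _ ( 1 * Tp n f)) => //.
  by apply: approx_mul => //; [apply: approx_one| apply: approxT].
by rewrite mul1r; apply: approxT.
Qed.
Lemma pmulD : left_distributive (@fmul R) padd.
Proof.
move=> f g h; apply: fext => n.
apply: (@approx_eq n _ _ ( (Tp n f + Tp n g) * Tp n h)) => //.
  by apply: approx_mul; [move=> i hi; rewrite coefD -!approxT|apply: approxT].
rewrite mulrDl => i hi; rewrite coefD /padd.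
by rewrite -(approx_mul (@approxT n f) (@approxT n h) hi) -(approx_mul (@approxT n g) (@approxT n h) hi).
Qed.
Lemma pone0 : (@fone R : ps) != 0.
Proof.
apply/negP => /eqP h; have := congr1 (fun f : ps => f 0%N) h.
by rewrite /fone /= => /eqP; rewrite oner_eq0.
Qed.
HB.instance Definition _ := GRing.Zmodule_isComNzRing.Build ps pmulA pmulC pmul1 pmulD pone0.

Implicit Types (f g h : ps) (p q : {poly R}).

Lemma coefpM f g n : (f * g) n = \sum_(i < n.+1) f i * g (n - i)%N.
Proof. by []. Qed.
Lemma coefpD f g n : (f + g) n = f n + g n. Proof. by []. Qed.
Lemma coefpN f n : (- f) n = - f n. Proof. by []. Qed.
Lemma coefpB f g n : (f - g) n = f n - g n. Proof. by []. Qed.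
Lemma coefp1 n : (1 : ps) n = (n == 0%N)%:R. Proof. by []. Qed.
Lemma coefp0 n : (0 : ps) n = 0. Proof. by []. Qed.

Lemma fpowE f m : fpow f m = f ^+ m.
Proof. by elim: m => [|m IH] //=; rewrite exprS -IH. Qed.

Lemma approxM N f g p q : approx N f p -> approx N g q -> approx N (f * g) (p * q).
Proof. exact: approx_mul. Qed.
Lemma approxX N f p m : approx N f p -> approx N (f ^+ m) (p ^+ m).
Proof.
move=> hf; elim: m => [|m IH]; first by rewrite !expr0; apply: approx_one.
by rewrite !exprS; apply: approxM.
Qed.
Lemma approx_le N M f p : (M <= N)%N -> approx N f p -> approx M f p.
Proof. by move=> hMN hf i hi; apply: hf; apply: leq_trans hMN. Qed.
Lemma approxB N f g p q : approx N f p -> approx N g q -> approx N (f - g) (p - q).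
Proof. by move=> hf hg; apply: approx_add => //; apply: approx_opp. Qed.
Lemma approx_sum N I (s : seq I) (P : pred I) (F : I -> ps) (G : I -> {poly R}) :
  (forall i, P i -> approx N (F i) (G i)) ->
  approx N (\sum_(i <- s | P i) F i) (\sum_(i <- s | P i) G i).
Proof.
move=> h; elim/big_rec2: _; first by move=> i _; rewrite coef0.
by move=> i y1 y2 Pi hy; apply: approx_add => //; apply: h.
Qed.

Definition pfun p : ps := fun i => p`_i.
Lemma approx_pfun N p : approx N (pfun p) p. Proof. by []. Qed.

Definition pC (c : R) : ps := fun n => (n == 0%N)%:R * c.
Definition pX : ps := fun n => (n == 1%N)%:R.
Definition pD f : ps := fun n => f n.+1 * n.+1%:R.

Lemma approx_C N c : approx N (pC c) c%:P.
Proof. by move=> i _; rewrite coefC /pC; case: eqP; rewrite ?mul1r ?mul0r. Qed.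
Lemma approx_pX N : approx N pX 'X.
Proof. by move=> i _; rewrite coefX. Qed.
Lemma approx_D N f p : approx N.+1 f p -> approx N (pD f) (deriv p).
Proof. by move=> hf i hi; rewrite coef_deriv /pD hf // mulr_natr. Qed.

Ltac fapprox n := apply: fext => n.

Lemma coefpCM c f n : (pC c * f) n = c * f n.
Proof.
rewrite (approxM (@approx_C n c) (@approxT n f)) // coefCM.
by rewrite (@approxT n f).
Qed.
Lemma coefXM f n : (pX * f) n = if n is n'.+1 then f n' else 0.
Proof.
rewrite (approxM (@approx_pX n) (@approxT n f)) // coefXM.
by case: n => // n; rewrite -(@approxT n.+1 f) // ltnW.
Qed.
Lemma coefXnM m f n : (pX ^+ m * f) n = if (n < m)%N then 0 else f (n - m)%N.
Proof.
rewrite (approxM (approxX m (@approx_pX n)) (@approxT n f)) // coefXnM.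
by case: ltnP => // _; rewrite -(@approxT n f) // leq_subr.
Qed.
Lemma coefpM0 f g : (f * g) 0%N = f 0%N * g 0%N.
Proof. by rewrite coefpM big_ord1. Qed.
Lemma coefpX0 f m : (f ^+ m) 0%N = f 0%N ^+ m.
Proof.
elim: m => [|m IH]; first by rewrite !expr0.
by rewrite !exprS coefpM0 IH.
Qed.

Lemma pD_add f g : pD (f + g) = pD f + pD g.
Proof. by apply: fext => n; rewrite /pD coefpD mulrDl. Qed.
Lemma pD_opp f : pD (- f) = - pD f.
Proof. by apply: fext => n; rewrite /pD coefpN mulNr. Qed.
Lemma pD_mul f g : pD (f * g) = pD f * g + f * pD g.
Proof.
apply: fext => n.
have hf := @approxT n.+1 f; have hg := @approxT n.+1 g.
rewrite (approx_D (approxM hf hg)) // derivM.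
rewrite coefpD (approxM (approx_D hf) (approx_le (leqnSn n) hg)) //.
by rewrite (approxM (approx_le (leqnSn n) hf) (approx_D hg)) // coefD.
Qed.
Lemma pD_C c : pD (pC c) = 0.
Proof. by apply: fext => n; rewrite /pD /pC /= mul0r mul0r. Qed.
Lemma pD_1 : pD 1 = 0.
Proof. by apply: fext => n; rewrite /pD coefp1 /= mul0r. Qed.
Lemma pD_X : pD pX = 1.
Proof. by apply: fext => n; rewrite /pD /pX coefp1 eqSS; case: n => [|n] /=; rewrite ?mulr1 ?mul0r. Qed.
Lemma coefpMn f m n : (f *+ m) n = f n *+ m.
Proof. by elim: m => [|m IH]; rewrite ?mulr0n // !mulrS coefpD IH. Qed.
Lemma pD_exp f m : pD (f ^+ m.+1) = (f ^+ m * pD f) *+ m.+1.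
Proof.
elim: m => [|m IH]; first by rewrite expr1 expr0 mul1r.
rewrite [f ^+ m.+2]exprS pD_mul IH.
rewrite -mulrnAr [in RHS]mulrS; congr (_ + _); first by rewrite mulrC.
by rewrite mulrA -exprS mulrnAr.
Qed.


Lemma expr_val f m i : f 0%N = 0 -> (i < m)%N -> (f ^+ m) i = 0.
Proof.
move=> hf; elim: m i => [|m IH] i // hi.
rewrite exprS coefpM big1 // => [[j hj]] _ /=.
case: j hj => [|j] hj; first by rewrite hf mul0r.
by rewrite IH ?mulr0 // ltn_subLR // (leq_trans hi) // addSn ltnS leq_addl.
Qed.
Lemma pexpr_val (G : {poly R}) m j : G`_0 = 0 -> (j < m)%N -> (G ^+ m)`_j = 0.
Proof.
move=> hG hj; rewrite -(approxX m (@approx_pfun j G)) //.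
exact: expr_val.
Qed.

Lemma pc_comp N p q (G : {poly R}) : (forall i, (i <= N)%N -> p`_i = q`_i) -> G`_0 = 0 ->
  forall j, (j <= N)%N -> (p \Po G)`_j = (q \Po G)`_j.
Proof.
move=> hpq hG j hj; apply/eqP; rewrite -subr_eq0 -coefB -comp_polyB.
rewrite comp_polyE coef_sum big1 // => i _; rewrite coefZ.
case: (leqP i N) => hi; first by rewrite coefB hpq // subrr mul0r.
by rewrite pexpr_val ?mulr0 // (leq_ltn_trans hj hi).
Qed.

Lemma approx_compT N f g (G : {poly R}) : approx N g G -> g 0%N = 0 ->
  approx N (fcomp f g) (Tp N f \Po G).
Proof.
move=> hg hg0 n hn.
rewrite /Tp poly_def linear_sum coef_sum /fcomp.
rewrite (big_ord_widen (N.+1) (fun m => f m * fpow g m n)) // big_mkcond /=.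
apply: eq_bigr => [[m hm]] _ /=.
rewrite comp_polyZ rmorphXn /= comp_polyX coefZ fpowE.
rewrite -(approxX m hg) //; case: ltnP => // hnm.
by rewrite expr_val ?mulr0.
Qed.

Lemma approx_comp N f g (P G : {poly R}) : approx N f P -> approx N g G -> g 0%N = 0 ->
  approx N (fcomp f g) (P \Po G).
Proof.
move=> hf hg hg0 n hn; rewrite (approx_compT f hg hg0) //.
apply: (pc_comp (N := N)) => //.
  by move=> i hi; rewrite -hf // -approxT.
by rewrite -hg.
Qed.

Section Comp.
Variable g : ps.
Hypothesis g0 : g 0%N = 0.

Lemma fcomp_mul f h : fcomp (f * h) g = fcomp f g * fcomp h g.
Proof.
apply: fext => n; have hg := @approxT n g.
have hf := @approxT n f; have hh := @approxT n h.
rewrite (approx_comp (approxM hf hh) hg g0) // comp_polyM.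
by rewrite (approxM (approx_comp hf hg g0) (approx_comp hh hg g0)).
Qed.
Lemma fcomp_add f h : fcomp (f + h) g = fcomp f g + fcomp h g.
Proof.
apply: fext => n; have hg := @approxT n g.
have hf := @approxT n f; have hh := @approxT n h.
rewrite (approx_comp (approx_add hf hh) hg g0) // comp_polyD.
by rewrite (approx_add (approx_comp hf hg g0) (approx_comp hh hg g0)).
Qed.
Lemma fcomp_opp f : fcomp (- f) g = - fcomp f g.
Proof.
apply: fext => n; have hg := @approxT n g; have hf := @approxT n f.
rewrite (approx_comp (approx_opp hf) hg g0) // raddfN /=.
by rewrite (approx_opp (approx_comp hf hg g0)).
Qed.
Lemma fcomp_C c : fcomp (pC c) g = pC c.
Proof.
apply: fext => n; have hg := @approxT n g.
by rewrite (approx_comp (@approx_C n c) hg g0) // comp_polyC (@approx_C n c).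
Qed.
Lemma fcomp_1 : fcomp 1 g = 1.
Proof.
apply: fext => n; have hg := @approxT n g.
by rewrite (approx_comp (@approx_one n) hg g0) // -polyC1 comp_polyC polyC1 coef1 coefp1.
Qed.
Lemma fcomp_X : fcomp pX g = g.
Proof.
apply: fext => n; have hg := @approxT n g.
by rewrite (approx_comp (@approx_pX n) hg g0) // comp_polyX hg.
Qed.
Lemma fcomp_exp f m : fcomp (f ^+ m) g = fcomp f g ^+ m.
Proof.
elim: m => [|m IH]; first by rewrite !expr0 fcomp_1.
by rewrite !exprS fcomp_mul IH.
Qed.
Lemma fcomp_chain f : pD (fcomp f g) = fcomp (pD f) g * pD g.
Proof.
apply: fext => n.
have hg := @approxT n.+1 g; have hf := @approxT n.+1 f.
have hgn := approx_le (leqnSn n) hg.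
rewrite (approx_D (approx_comp hf hg g0)) // deriv_comp.
by rewrite (approxM (approx_comp (approx_D hf) hgn g0) (approx_D hg)).
Qed.
Lemma fcomp0 f : fcomp f g 0%N = f 0%N.
Proof. by rewrite /fcomp big_ord1 /= mulr1. Qed.
End Comp.

Lemma fgeom_mul : (@fgeom R : ps) * (1 - pX) = 1.
Proof.
apply: fext => n; rewrite mulrBr mulr1 coefpB mulrC coefXM /fgeom coefp1.
by case: n => [|n]; rewrite ?subr0 ?subrr.
Qed.

Lemma finvK f : f 0%N = 1 -> Defs.finv f * f = 1.
Proof.
move=> f0.
have u0 : (1 - f) 0%N = 0 by rewrite coefpB f0 subrr.
have -> : Defs.finv f = fcomp (@fgeom R) (1 - f) by [].
have := congr1 (fun h => fcomp h (1 - f)) fgeom_mul => /=.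
have e : (1 : ps) - (1 - f) = f by rewrite opprB addrC subrK.
by rewrite fcomp_mul // fcomp_1 // fcomp_add // fcomp_opp // fcomp_1 // fcomp_X // e.
Qed.

Lemma natr_neq0 n : (n.+1%:R : R) != 0.
Proof. by rewrite pnatr_eq0. Qed.
Lemma fact_neq0 n : (n`!%:R : R) != 0.
Proof. by rewrite pnatr_eq0 -lt0n fact_gt0. Qed.

Lemma pXK f h : pX * f = pX * h -> f = h.
Proof.
move=> e; apply: fext => n.
by have := congr1 (fun u : ps => u n.+1) e; rewrite /= !coefXM.
Qed.

Lemma pD_uniq F H : pD F = pD H -> F 0%N = H 0%N -> F = H.
Proof.
move=> e e0; apply: fext => -[|n] //.
have := congr1 (fun u : ps => u n) e; rewrite /pD => /(congr1 (fun y => y / n.+1%:R)).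
by rewrite !mulfK ?natr_neq0.
Qed.

Definition E1 : ps := @fexpm1_over_t R.
Definition Gx : ps := pX * E1.
Definition psi : ps := Defs.finv E1.
Definition L : ps := @flog1p R.
Definition Ls : ps := fshift L.

Lemma Gx0 : Gx 0%N = 0.
Proof. by rewrite /Gx coefXM. Qed.
Lemma E10 : E1 0%N = 1.
Proof. by rewrite /E1 /fexpm1_over_t /= invr1. Qed.
Lemma psiE1 : psi * E1 = 1.
Proof. exact: finvK E10. Qed.
Lemma psi0 : psi 0%N = 1.
Proof.
have := congr1 (fun u : ps => u 0%N) psiE1; rewrite /= coefpM0 E10 mulr1 => ->.
by [].
Qed.
Lemma psiGx : psi * Gx = pX.
Proof. by rewrite /Gx mulrA [psi * _]mulrC -mulrA psiE1 mulr1. Qed.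

Lemma pD_Gx : pD Gx = 1 + Gx.
Proof.
apply: fext => n; rewrite /pD coefpD /Gx !coefXM coefp1 /E1 /fexpm1_over_t.
rewrite factS natrM invfM mulrAC mulVf ?natr_neq0 // mul1r.
by case: n => [|n] /=; rewrite ?addr0 ?add0r // invr1.
Qed.

Lemma L0 : L 0%N = 0. Proof. by []. Qed.
Lemma pD_L : pD L * (1 + pX) = 1.
Proof.
apply: fext => n; rewrite mulrDr mulr1 coefpD mulrC coefXM coefp1 /pD /L /flog1p /=.
rewrite mulfVK ?natr_neq0 //; case: n => [|n] /=; first by rewrite expr0 addr0.
by rewrite mulfVK ?natr_neq0 // exprS mulN1r addNr.
Qed.
Lemma L_Ls : L = pX * Ls.
Proof. by apply: fext => -[|n]; rewrite coefXM. Qed.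
Lemma Ls0 : Ls 0%N = 1.
Proof. by rewrite /Ls /fshift /L /flog1p /= expr0 divr1. Qed.

Lemma fcomp_L_Gx : fcomp L Gx = pX.
Proof.
apply: pD_uniq; last by rewrite fcomp0 // Gx0.
rewrite fcomp_chain ?Gx0 // pD_Gx pD_X.
have -> : (1 + Gx) = fcomp (1 + pX) Gx by rewrite fcomp_add ?Gx0 // fcomp_1 ?fcomp_X ?Gx0.
by rewrite -fcomp_mul ?Gx0 // pD_L fcomp_1 // Gx0.
Qed.

Lemma fcomp_Ls_Gx : fcomp Ls Gx = psi.
Proof.
have e := fcomp_L_Gx; rewrite L_Ls fcomp_mul ?Gx0 // fcomp_X ?Gx0 // in e.
rewrite {1}/Gx -mulrA -{2}(mulr1 pX) in e; move/pXK: e => e.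
by rewrite -(mul1r (fcomp Ls _)) -psiE1 -mulrA e mulr1.
Qed.

Definition B : ps := @fbase R.
Lemma fonept_E : @fonept R = 1 + pX.
Proof.
apply: fext => n; rewrite coefpD coefp1 /pX /fonept.
by case: n => [|[|n]] //=; rewrite ?addr0 ?add0r.
Qed.
Lemma B_inv : B * ((1 + pX) * Ls) = 1.
Proof.
have h : ((1 + pX) * Ls) 0%N = 1.
  by rewrite coefpM0 coefpD coefp1 /pX /= addr0 mul1r Ls0.
by rewrite /B /fbase fonept_E; exact: finvK h.
Qed.
Lemma B_Gx : fcomp B Gx * (1 + Gx) * psi = 1.
Proof.
have := congr1 (fun h => fcomp h Gx) B_inv => /=.
rewrite !fcomp_mul ?Gx0 // fcomp_add ?Gx0 // !(fcomp_1 Gx0) (fcomp_X Gx0).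
by rewrite fcomp_Ls_Gx mulrA.
Qed.

Lemma coef_mul_comp A f g : g 0%N = 0 -> forall n,
  (A * fcomp f g) n = \sum_(m < n.+1) f m * (A * g ^+ m) n.
Proof.
move=> g0 n; have hg := @approxT n g.
rewrite (approxM (@approxT n A) (approx_compT f hg g0)) //.
rewrite [Tp n f]/Tp poly_def linear_sum /= mulr_sumr coef_sum; apply: eq_bigr => m _.
rewrite comp_polyZ rmorphXn /= comp_polyX -scalerAr coefZ.
by rewrite -(approxM (@approxT n A) (approxX m hg)).
Qed.

Lemma pX_Dpsi : pX * pD psi = psi - psi ^+ 2 * pD Gx.
Proof.
have e := congr1 pD psiGx; rewrite pD_mul pD_X in e.
apply/eqP; rewrite eq_sym subr_eq; apply/eqP.
rewrite -psiGx -[in LHS](mulr1 psi) -e; ring.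
Qed.

Lemma keyK j : (psi ^+ j.+1 * pD Gx) j = (j == 0%N)%:R.
Proof.
case: j => [|i].
  by rewrite coefpM0 coefpX0 psi0 expr1n mul1r pD_Gx coefpD Gx0 addr0.
have h2 : pX * pD (psi ^+ i.+1) = psi ^+ i.+1 *+ i.+1 - (psi ^+ i.+2 * pD Gx) *+ i.+1.
  rewrite pD_exp mulrnAr -mulrnBl; congr (_ *+ _).
  by rewrite mulrCA pX_Dpsi mulrBr -exprSr mulrA -exprD addn2.
have := congr1 (fun u : ps => u i.+1) h2; rewrite /= coefXM coefpB !coefpMn.
rewrite [pD _ i]/pD mulr_natr => /eqP.
by rewrite -subr_eq0 opprB addrC subrK mulrn_eq0 /= => /eqP.
Qed.

Lemma coef_term n m : (m <= n)%N ->
  (psi ^+ n.+1 * (1 + Gx) * Gx ^+ m) n = (n == m)%:R.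
Proof.
move=> hmn.
have -> : psi ^+ n.+1 * (1 + Gx) * Gx ^+ m = pX ^+ m * (psi ^+ (n - m).+1 * pD Gx).
  rewrite -(subnK hmn) -addSn exprD subnK // pD_Gx -psiGx (exprMn m psi Gx).
  set a := psi ^+ _; set b := psi ^+ m; set c := Gx ^+ m; ring.
rewrite coefXnM ltnNge hmn /= keyK subn_eq0.
by rewrite eqn_leq hmn andbT.
Qed.

Lemma fbase_coef n : B n = (psi ^+ n) n.
Proof.
have e : psi ^+ n = psi ^+ n.+1 * (1 + Gx) * fcomp B Gx.
  rewrite exprS -[LHS]mulr1 -[in LHS]B_Gx.
  set a := psi ^+ n; set b := fcomp B Gx; ring.
rewrite e coef_mul_comp ?Gx0 // big_ord_recr /= big1 ?add0r.
  by rewrite coef_term // eqxx mulr1.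
move=> [m hm] _ /=; rewrite coef_term ?(ltnW hm) //.
by rewrite eq_sym (ltn_eqF hm) mulr0.
Qed.

Lemma bern_eq a : bern R a a = a`!%:R * B a.
Proof. by rewrite /bern fpowE fbase_coef. Qed.

Definition F1p (x : R) : ps := @fpow1p R x.

Lemma pD_exp_series : pD (@fexp R) = @fexp R.
Proof.
apply: fext => n; rewrite /pD /fexp factS natrM invfM mulrAC mulVf ?natr_neq0 //.
by rewrite mul1r.
Qed.

Lemma F1p_ode x : (1 + pX) * pD (F1p x) = pC x * F1p x.
Proof.
have xL : (fun n => x * flog1p R n) = pC x * L.
  by apply: fext => n; rewrite coefpCM.
have g0 : (pC x * L) 0%N = 0 by rewrite coefpCM L0 mulr0.
rewrite /F1p /fpow1p xL fcomp_chain // pD_exp_series pD_mul pD_C mul0r add0r.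
set F := fcomp _ _; set c := pC x.
have -> : (1 + pX) * (F * (c * pD L)) = c * F * (pD L * (1 + pX)) by ring.
by rewrite pD_L mulr1.
Qed.

Lemma F1p_rec x n : F1p x n.+1 * n.+1%:R = (x - n%:R) * F1p x n.
Proof.
have := congr1 (fun u : ps => u n) (F1p_ode x).
rewrite /= mulrDl mul1r coefpD coefXM coefpCM.
case: n => [|n]; first by rewrite addr0 subr0 /pD.
rewrite [pD _ n.+1]/pD [pD _ n]/pD => e.
by rewrite mulrBl -e; ring.
Qed.

Lemma F1p_coef x n : F1p x n = (\prod_(i < n) (x - i%:R)) / n`!%:R.
Proof.
elim: n => [|n IH].
  rewrite big_ord0 /F1p /fpow1p fcomp0 /=.
  by rewrite /fexp mul1r.
apply: (mulIf (natr_neq0 n)); rewrite F1p_rec IH big_ord_recr /= factS natrM.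
by field; rewrite fact_neq0 addrC natr1 natr_neq0.
Qed.

Lemma falling_S1 (x : R) n :
  \prod_(i < n) (x - i%:R) = \sum_(j < n.+1) (S1 n j)%:~R * x ^+ j.
Proof.
set P : {poly R} := \prod_(i < n) ('X - (i%:R)%:P).
have hP : map_poly intr (\prod_(i < n) ('X - (i%:R)%:P) : {poly int}) = P.
  rewrite rmorph_prod /=; apply: eq_bigr => i _.
  by rewrite map_polyXsubC /= rmorph_nat.
have -> : \prod_(i < n) (x - i%:R) = P.[x].
  by rewrite horner_prod; apply: eq_bigr => i _; rewrite hornerXsubC.
rewrite (@horner_coef_wide _ n.+1).
  by apply: eq_bigr => j _; rewrite -hP coef_map.
by rewrite /P size_prod_XsubC [index_enum _]unlock -enumT size_enum_ord.
Qed.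

Lemma pow_coef (F : ps) r a :
  (F ^+ r) a = \sum_(s : {ffun 'I_r -> 'I_a.+1} | (\sum_(i < r) (s i : nat))%N == a)
                 \prod_(i < r) F (s i).
Proof.
rewrite (approxX r (@approxT a F)) // /Tp poly_def.
have -> : (\sum_(i < a.+1) F i *: 'X^i) ^+ r
          = \prod_(j < r) \sum_(i < a.+1) F i *: 'X^i.
  by rewrite prodr_const card_ord.
rewrite bigA_distr_bigA /= coef_sum [RHS]big_mkcond /=.
apply: eq_bigr => s _.
rewrite (eq_bigr (fun i => (F (s i))%:P * 'X^(s i))); last by move=> i _; rewrite mul_polyC.
rewrite big_split /= -rmorph_prod prodrXr coefCM coefXn eq_sym.
by case: eqP; rewrite ?mulr1 ?mulr0.
Qed.

Lemma inner_s (r : nat) (k : int) n j l a : (l + j <= n)%N -> (a <= n - j - l)%N ->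
  \sum_(s : {ffun 'I_r -> 'I_a.+1} | (\sum_(i < r) (s i : nat))%N == a)
         'C(n, l + j)%:R * 'C(n - j - l, a)%:R
         * multinom R a (fun i => (s i : nat))
         * (S1 (l + j) j)%:~R
         * (\prod_(i < r) bern R (s i) (s i))
         * tC R k (n - j - l - a)
  = n`!%:R / (l + j)`!%:R * (S1 (l + j) j)%:~R * fLifmlog R k (n - j - l - a)%N
    * (B ^+ r) a.
Proof.
move=> hm ha.
have e0 : (n - j - l = n - (l + j))%N by rewrite -subnDA addnC.
rewrite e0 in ha *.
set m := (l + j)%N in hm ha *; set c := (n - m - a)%N.
have e1 : (n`!%:R : R) = 'C(n, m)%:R * (m`!%:R * (n - m)`!%:R).
  by rewrite -!natrM bin_fact.
have e2 : ((n - m)`!%:R : R) = 'C(n - m, a)%:R * (a`!%:R * c`!%:R).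
  by rewrite -!natrM bin_fact.
rewrite pow_coef mulr_sumr; apply: eq_bigr => s _.
rewrite /multinom /tC (eq_bigr _ (fun i _ => bern_eq (s i))) big_split /=.
have hP : \prod_(i < r) ((s i)`!%:R : R) != 0.
  by apply/prodf_neq0 => i _; apply: fact_neq0.
rewrite e1 e2; field.
by rewrite hP fact_neq0.
Qed.

Lemma tri_exchange n (G : nat -> nat -> R) :
  \sum_(j < n.+1) \sum_(l < (n - j).+1) G j (l + j)%N
  = \sum_(m < n.+1) \sum_(j < m.+1) G j m.
Proof.
transitivity (\sum_(j < n.+1) \sum_(m < n.+1) (if (j <= m)%N then G j m else 0)).
  apply: eq_bigr => [[j hj]] _ /=.
  rewrite -(big_mkord xpredT (fun l => G j (l + j)%N)) -subSn //.
  rewrite -{1}(add0n j) -(big_addn 0 n.+1 j xpredT) big_geq_mkord big_mkcond /=.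
  by apply: eq_bigr.
rewrite exchange_big /=; apply: eq_bigr => [[m hm]] _ /=.
rewrite (big_ord_widen n.+1 (fun j => G j m) hm) [RHS]big_mkcond /=.
by apply: eq_bigr => j _; rewrite ltnS.
Qed.
End PS.

Theorem corollary4 (R : numFieldType) (n r : nat) (k : int) (x : R) :
  (0 < r)%N ->
  tA n r k x =
  \sum_(j < n.+1)
    (\sum_(l < (n - j).+1) \sum_(a < (n - j - l).+1)
       \sum_(s : {ffun 'I_r -> 'I_a.+1} | (\sum_(i < r) (s i : nat))%N == a)
         'C(n, l + j)%:R * 'C(n - j - l, a)%:R
         * multinom R a (fun i => (s i : nat))
         * (S1 (l + j) j)%:~R
         * (\prod_(i < r) bern R (s i) (s i))
         * tC R k (n - j - l - a)) * x ^+ j.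
Proof.
move=> _.
have hL : tA n r k x = n`!%:R * \sum_(m < n.+1)
    F1p x m * ((B R ^+ r) * fLifmlog R k) (n - m)%N.
  by rewrite /tA fpowE [fmul _ (fpow1p _)]pmulC.
pose G j m := (\sum_(a < (n - m).+1) n`!%:R / m`!%:R * (S1 m j)%:~R
    * fLifmlog R k (n - m - a)%N * (B R ^+ r) a) * x ^+ j.
have hR : forall j : 'I_n.+1,
  (\sum_(l < (n - j).+1) \sum_(a < (n - j - l).+1)
       \sum_(s : {ffun 'I_r -> 'I_a.+1} | (\sum_(i < r) (s i : nat))%N == a)
         'C(n, l + j)%:R * 'C(n - j - l, a)%:R
         * multinom R a (fun i => (s i : nat))
         * (S1 (l + j) j)%:~R
         * (\prod_(i < r) bern R (s i) (s i))
         * tC R k (n - j - l - a)) * x ^+ j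
  = \sum_(l < (n - j).+1) G j (l + j)%N.
  move=> [j hj] /=; rewrite mulr_suml; apply: eq_bigr => [[l hl]] _ /=.
  have hlj : (l + j <= n)%N by lia.
  have e0 : (n - j - l = n - (l + j))%N by rewrite -subnDA addnC.
  rewrite /G -e0; congr (_ * _); apply: eq_bigr => [[a ha]] _ /=.
  by rewrite inner_s.
rewrite (eq_bigr (fun j : 'I_n.+1 => \sum_(l < (n - j).+1) G j (l + j)%N)); last by move=> j _; exact: hR.
rewrite (tri_exchange n G) hL mulr_sumr.
apply: eq_bigr => [[m hm]] _ /=.
rewrite F1p_coef falling_S1 coefpM /G.
rewrite mulr_suml mulr_suml mulr_sumr; apply: eq_bigr => j _.
rewrite mulr_suml mulr_sumr mulr_sumr; apply: eq_bigr => a _.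
ring.
Qed.
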